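(* Let $(\tau_1,\tau_2)$ have a bivariate wide-sense geometric law with $\mathbb{P}(\tau_1>1)>0$ and $\mathbb{P}(\tau_2>1)>0$. Then the law of $(\tau_1,\tau_2)$ is a bivariate narrow-sense geometric law if and only if $\mathrm{Corr}[\tau_1,\tau_2]\ge0$. Explicitly, if $\mathrm{Corr}[\tau_1,\tau_2]\ge 0$ and $\tilde p_\emptyset>0$, then $(\tau_1,\tau_2)\sim\mathcal{G}^{\mathcal N}(p_{\{1\}},p_{\{2\}},p_{\{1,2\}})$ with $$p_{\{1\}}=\frac{\tilde p_\emptyset}{\tilde p_\emptyset+\tilde p_{\{1\}}},\quad p_{\{2\}}=\frac{\tilde p_\emptyset}{\tilde p_\emptyset+\tilde p_{\{2\}}},\quad p_{\{1,2\}}=\frac{(\tilde p_\emptyset+\tilde p_{\{1\}})(\tilde p_\emptyset+\tilde p_{\{2\}})}{\tilde p_\emptyset}.$$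
   Context: Narrow-sense law $\mathcal{G}^{\mathcal N}(\mathbf p)$ in dimension $2$: for $p_{\{1\}},p_{\{2\}},p_{\{1,2\}}\in[0,1]$ with $p_{\{1\}}p_{\{1,2\}}<1$, $p_{\{2\}}p_{\{1,2\}}<1$, take independent $E_I$ with $\mathbb{P}(E_I>n)=p_I^n$ and $\tau_1=\min(E_{\{1\}},E_{\{1,2\}})$, $\tau_2=\min(E_{\{2\}},E_{\{1,2\}})$. Wide-sense law in dimension 2: for $\tilde p_I\in[0,1]$, $I\subseteq\{1,2\}$, summing to $1$ with $\sum_{I\not\ni k}\tilde p_I<1$ ($k=1,2$), run i.i.d. trials with outcome $I$ of probability $\tilde p_I$, let $\tilde E_I$ be the first trial with outcome $I$, and $\tau_k=\min\{\tilde E_I:k\in I\}$; then $\mathbb{P}(\tau_1>i,\tau_2>j)=(\tilde p_\emptyset+\tilde p_{\{2\}})^{i-j}\tilde p_\emptyset^j$ for $i\ge j$ and $(\tilde p_\emptyset+\tilde p_{\{1\}})^{j-i}\tilde p_\emptyset^i$ for $i<j$. *)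

(* Defs.v *)
From Stdlib Require Import Reals Lra Lia Arith ClassicalEpsilon.
Open Scope R_scope.

(* A law of an N-valued random pair (tau1,tau2) (values in {1,2,...}) is
   represented by its joint survival function
   S i j = P(tau1 > i, tau2 > j), for i j : nat (this determines the law). *)
Definition survival := nat -> nat -> R.

(* Wide-sense geometric law: survival function given explicitly in the paper,
   with parameters q0 = p~_empty, q1 = p~_{1}, q2 = p~_{2}, q12 = p~_{1,2}. *)
Definition wide_params (q0 q1 q2 q12 : R) : Prop :=
  0 <= q0 <= 1 /\ 0 <= q1 <= 1 /\ 0 <= q2 <= 1 /\ 0 <= q12 <= 1 /\
  q0 + q1 + q2 + q12 = 1 /\
  q0 + q2 < 1 /\ q0 + q1 < 1.

Definition wide_survival (q0 q1 q2 q12 : R) : survival :=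
  fun i j => if (j <=? i)%nat then (q0 + q2) ^ (i - j) * q0 ^ j
             else (q0 + q1) ^ (j - i) * q0 ^ i.

(* Narrow-sense geometric law G^N(p1,p2,p12): tau1 = min(E1,E12),
   tau2 = min(E2,E12) with independent E_I, P(E_I > n) = p_I^n; by
   independence P(tau1>i, tau2>j) = P(E1>i) P(E2>j) P(E12>max i j). *)
Definition narrow_params (p1 p2 p12 : R) : Prop :=
  0 <= p1 <= 1 /\ 0 <= p2 <= 1 /\ 0 <= p12 <= 1 /\
  p1 * p12 < 1 /\ p2 * p12 < 1.

Definition narrow_survival (p1 p2 p12 : R) : survival :=
  fun i j => p1 ^ i * p2 ^ j * p12 ^ (Nat.max i j).

(* point masses: P(tau1 = i, tau2 = j) for i, j >= 1 *)
Definition pmf (Sv : survival) (i j : nat) : R :=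
  Sv (i - 1)%nat (j - 1)%nat - Sv i (j - 1)%nat - Sv (i - 1)%nat j + Sv i j.

(* limit of a real sequence (if it converges; arbitrary otherwise) *)
Definition Rlim (u : nat -> R) : R :=
  epsilon (inhabits 0) (fun l => Un_cv u l).

(* E[f(tau1,tau2)] = sum over i,j >= 1 of f(i,j) P(tau1=i,tau2=j),
   the double series of nonnegative-mass terms taken as the limit of
   partial sums over the squares {1..N}^2. *)
Definition expect (Sv : survival) (f : nat -> nat -> R) : R :=
  Rlim (fun N => sum_f_R0 (fun a =>
          sum_f_R0 (fun b => f (S a) (S b) * pmf Sv (S a) (S b)) N) N).

Definition tau1 (i j : nat) : R := INR i.
Definition tau2 (i j : nat) : R := INR j.

Definition Cov (Sv : survival) : R :=
  expect Sv (fun i j => INR i * INR j) - expect Sv tau1 * expect Sv tau2.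
Definition Var1 (Sv : survival) : R :=
  expect Sv (fun i j => INR i * INR i) - expect Sv tau1 ^ 2.
Definition Var2 (Sv : survival) : R :=
  expect Sv (fun i j => INR j * INR j) - expect Sv tau2 ^ 2.
Definition Corr (Sv : survival) : R := Cov Sv / sqrt (Var1 Sv * Var2 Sv).

(* Main.v *)
Require Import Defs.
From Stdlib Require Import Reals Lra Lia Arith ClassicalEpsilon.
Open Scope R_scope.

Lemma sum_sub (f g : nat -> R) N :
  sum_f_R0 (fun k => f k - g k) N = sum_f_R0 f N - sum_f_R0 g N.
Proof. induction N; cbn [sum_f_R0]; [ring | rewrite IHN; ring]. Qed.

Lemma sum_scal c (f : nat -> R) N :
  sum_f_R0 (fun k => c * f k) N = c * sum_f_R0 f N.
Proof. induction N; cbn [sum_f_R0]; [ring | rewrite IHN; ring]. Qed.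

Lemma tele (X : nat -> R) N :
  sum_f_R0 (fun k => X k - X (S k)) N = X 0%nat - X (S N).
Proof. induction N; cbn [sum_f_R0]; [ring | rewrite IHN; ring]. Qed.

Lemma abel1 (X : nat -> R) N :
  sum_f_R0 (fun k => INR (S k) * (X k - X (S k))) N
  = sum_f_R0 X N - INR (S N) * X (S N).
Proof.
  induction N; cbn [sum_f_R0].
  - simpl. ring.
  - rewrite IHN. rewrite (S_INR (S N)). ring.
Qed.

Lemma abel2 (X : nat -> R) N :
  sum_f_R0 (fun k => INR (S k) * INR (S k) * (X k - X (S k))) N
  = sum_f_R0 (fun k => (2 * INR k + 1) * X k) N - INR (S N) * INR (S N) * X (S N).
Proof.
  induction N; cbn [sum_f_R0].
  - simpl. ring.
  - rewrite IHN. rewrite (S_INR (S N)). rewrite (S_INR N). ring.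
Qed.

Lemma pmfS (Sv : survival) a b :
  pmf Sv (S a) (S b) = (Sv a b - Sv (S a) b) - (Sv a (S b) - Sv (S a) (S b)).
Proof.
  unfold pmf. replace (S a - 1)%nat with a by lia.
  replace (S b - 1)%nat with b by lia. ring.
Qed.

Lemma P12 (Sv : survival) N :
  sum_f_R0 (fun a => sum_f_R0 (fun b => INR (S a) * INR (S b) * pmf Sv (S a) (S b)) N) N
  = sum_f_R0 (fun i => sum_f_R0 (fun j => Sv i j) N) N
    - INR (S N) * sum_f_R0 (fun i => Sv i (S N)) N
    - INR (S N) * sum_f_R0 (fun j => Sv (S N) j) N
    + INR (S N) * INR (S N) * Sv (S N) (S N).
Proof.
  set (Z := fun i => sum_f_R0 (fun j => Sv i j) N - INR (S N) * Sv i (S N)).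
  rewrite (sum_eq _ (fun a => INR (S a) * (Z a - Z (S a)))).
  2:{ intros a _.
      set (Y := fun j => Sv a j - Sv (S a) j).
      rewrite (sum_eq _ (fun b => INR (S a) * (INR (S b) * (Y b - Y (S b))))).
      2:{ intros b _. unfold Y. rewrite pmfS. ring. }
      rewrite sum_scal. rewrite abel1. unfold Y, Z. rewrite (sum_sub (fun j => Sv a j) (fun j => Sv (S a) j)). ring. }
  rewrite abel1. unfold Z. rewrite sum_sub, sum_scal. ring.
Qed.

Lemma P1 (Sv : survival) N :
  sum_f_R0 (fun a => sum_f_R0 (fun b => INR (S a) * pmf Sv (S a) (S b)) N) N
  = sum_f_R0 (fun i => Sv i 0%nat) N - sum_f_R0 (fun i => Sv i (S N)) N
    - INR (S N) * (Sv (S N) 0%nat - Sv (S N) (S N)).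
Proof.
  set (W := fun i => Sv i 0%nat - Sv i (S N)).
  rewrite (sum_eq _ (fun a => INR (S a) * (W a - W (S a)))).
  2:{ intros a _.
      set (Y := fun j => Sv a j - Sv (S a) j).
      rewrite (sum_eq _ (fun b => INR (S a) * (Y b - Y (S b)))).
      2:{ intros b _. unfold Y. rewrite pmfS. ring. }
      rewrite sum_scal. rewrite tele. unfold Y, W. ring. }
  rewrite abel1. unfold W. rewrite sum_sub. ring.
Qed.

Lemma P11 (Sv : survival) N :
  sum_f_R0 (fun a => sum_f_R0 (fun b => INR (S a) * INR (S a) * pmf Sv (S a) (S b)) N) N
  = sum_f_R0 (fun i => (2 * INR i + 1) * Sv i 0%nat) N
    - sum_f_R0 (fun i => (2 * INR i + 1) * Sv i (S N)) N
    - INR (S N) * INR (S N) * (Sv (S N) 0%nat - Sv (S N) (S N)).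
Proof.
  set (W := fun i => Sv i 0%nat - Sv i (S N)).
  rewrite (sum_eq _ (fun a => INR (S a) * INR (S a) * (W a - W (S a)))).
  2:{ intros a _.
      set (Y := fun j => Sv a j - Sv (S a) j).
      rewrite (sum_eq _ (fun b => INR (S a) * INR (S a) * (Y b - Y (S b)))).
      2:{ intros b _. unfold Y. rewrite pmfS. ring. }
      rewrite sum_scal. rewrite tele. unfold Y, W. ring. }
  rewrite abel2. unfold W.
  rewrite (sum_eq _ (fun k => (2 * INR k + 1) * Sv k 0%nat - (2 * INR k + 1) * Sv k (S N))).
  2:{ intros; ring. }
  rewrite sum_sub. ring.
Qed.

Lemma P2 (Sv : survival) N :
  sum_f_R0 (fun a => sum_f_R0 (fun b => INR (S b) * pmf Sv (S a) (S b)) N) N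
  = sum_f_R0 (fun j => Sv 0%nat j) N - INR (S N) * Sv 0%nat (S N)
    - sum_f_R0 (fun j => Sv (S N) j) N + INR (S N) * Sv (S N) (S N).
Proof.
  set (Z := fun i => sum_f_R0 (fun j => Sv i j) N - INR (S N) * Sv i (S N)).
  rewrite (sum_eq _ (fun a => Z a - Z (S a))).
  2:{ intros a _.
      set (Y := fun j => Sv a j - Sv (S a) j).
      rewrite (sum_eq _ (fun b => INR (S b) * (Y b - Y (S b)))).
      2:{ intros b _. unfold Y. rewrite pmfS. ring. }
      rewrite abel1. unfold Y, Z. rewrite (sum_sub (fun j => Sv a j) (fun j => Sv (S a) j)). ring. }
  rewrite tele. unfold Z. ring.
Qed.

Lemma P22 (Sv : survival) N :
  sum_f_R0 (fun a => sum_f_R0 (fun b => INR (S b) * INR (S b) * pmf Sv (S a) (S b)) N) N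
  = sum_f_R0 (fun j => (2 * INR j + 1) * Sv 0%nat j) N - INR (S N) * INR (S N) * Sv 0%nat (S N)
    - sum_f_R0 (fun j => (2 * INR j + 1) * Sv (S N) j) N
    + INR (S N) * INR (S N) * Sv (S N) (S N).
Proof.
  set (Z := fun i => sum_f_R0 (fun j => (2 * INR j + 1) * Sv i j) N
                     - INR (S N) * INR (S N) * Sv i (S N)).
  rewrite (sum_eq _ (fun a => Z a - Z (S a))).
  2:{ intros a _.
      set (Y := fun j => Sv a j - Sv (S a) j).
      rewrite (sum_eq _ (fun b => INR (S b) * INR (S b) * (Y b - Y (S b)))).
      2:{ intros b _. unfold Y. rewrite pmfS. ring. }
      rewrite abel2. unfold Y, Z.
      rewrite (sum_eq (fun k => (2 * INR k + 1) * (Sv a k - Sv (S a) k))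
                 (fun k => (2 * INR k + 1) * Sv a k - (2 * INR k + 1) * Sv (S a) k)).
      2:{ intros; ring. }
      rewrite sum_sub. ring. }
  rewrite tele. unfold Z. ring.
Qed.

Lemma bern h n : 0 <= h -> INR n * (INR n - 1) / 2 * h^2 <= (1+h)^n.
Proof.
  intro Hh.
  assert (G : forall n, 1 + INR n * h + INR n * (INR n - 1) / 2 * h^2 <= (1+h)^n).
  { induction n0.
    - simpl. lra.
    - assert (Hn : 0 <= INR n0 * (INR n0 - 1)).
      { destruct n0. simpl. lra. rewrite S_INR. pose proof (pos_INR n0). nra. }
      rewrite S_INR. cbn [pow].
      assert (H3 : 0 <= INR n0 * (INR n0 - 1) / 2 * h^2 * h).
      { apply Rmult_le_pos; [|lra]. apply Rmult_le_pos; [lra|]. nra. }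
      assert (H4 : (1+h) * (1 + INR n0 * h + INR n0 * (INR n0 - 1) / 2 * h^2) <= (1+h) * (1+h)^n0).
      { apply Rmult_le_compat_l; lra. }
      nra. }
  pose proof (G n). pose proof (pos_INR n). nra.
Qed.

Lemma cv_w e : 0 < e < 1 -> Un_cv (fun N => INR (S N) * e ^ N) 0.
Proof.
  intros He.
  set (h := / e - 1).
  assert (Hh : 0 < h).
  { unfold h. assert (1 < / e). { rewrite <- Rinv_1. apply Rinv_lt_contravar; lra. } lra. }
  assert (Hone : forall n, (1+h)^n * e^n = 1).
  { intro n. rewrite <- Rpow_mult_distr. unfold h.
    replace ((1 + (/ e - 1)) * e) with 1 by (field; lra). apply pow1. }
  assert (Hb : forall n, (3 <= n)%nat -> INR (S n) * e ^ n <= 4 / (INR n * h^2)).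
  { intros n Hn.
    pose proof (bern h n (Rlt_le _ _ Hh)) as B.
    assert (Hen : 0 < e ^ n) by (apply pow_lt; lra).
    assert (Hn3 : 3 <= INR n) by (replace 3 with (INR 3) by (simpl; ring); apply le_INR; exact Hn).
    assert (B2 : INR n * (INR n - 1) / 2 * h^2 * e^n <= 1).
    { apply (Rle_trans _ ((1+h)^n * e^n)); [apply Rmult_le_compat_r; lra | rewrite Hone; lra]. }
    rewrite S_INR.
    assert (Hh2 : 0 < h^2) by (apply pow_lt; lra).
    apply (Rmult_le_reg_r (INR n * h^2)). nra.
    replace (4 / (INR n * h ^ 2) * (INR n * h ^ 2)) with 4 by (field; split; lra).
    assert (INR n + 1 <= 2 * (INR n - 1)) by lra.
    assert (0 <= INR n * h^2 * e^n) by (apply Rmult_le_pos; [nra| lra]).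
    nra. }
  intros eps Heps.
  assert (Hh2 : 0 < h^2) by (apply pow_lt; lra).
  destruct (archimed_cor1 (eps * h^2 / 4)) as [N0 [HN0 HN0p]].
  { apply Rmult_lt_0_compat; [nra|lra]. }
  exists (Nat.max N0 3). intros n Hn.
  unfold R_dist. rewrite Rminus_0_r.
  assert (Hen : 0 < e ^ n) by (apply pow_lt; lra).
  rewrite Rabs_right by (apply Rle_ge; apply Rmult_le_pos; [apply pos_INR | lra]).
  eapply Rle_lt_trans. apply Hb. lia.
  assert (HN0r : 0 < INR N0) by (apply lt_0_INR; lia).
  assert (INR N0 <= INR n) by (apply le_INR; lia).
  apply (Rle_lt_trans _ (4 / (INR N0 * h^2))).
  - unfold Rdiv. apply Rmult_le_compat_l. lra.
    apply Rinv_le_contravar. nra. nra.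
  - replace (4 / (INR N0 * h ^ 2)) with (4 / h^2 * / INR N0) by (field; split; lra).
    apply (Rmult_lt_reg_l (h^2 / 4)). lra.
    replace (h ^ 2 / 4 * (4 / h ^ 2 * / INR N0)) with (/ INR N0) by (field; lra).
    lra.
Qed.

Lemma cv_ext (u w : nat -> R) l : (forall n, u n = w n) -> Un_cv u l -> Un_cv w l.
Proof. intros E H eps He. destruct (H eps He) as [N HN]. exists N. intros n Hn. rewrite <- E. auto. Qed.

Lemma cv_v c : 0 < c < 1 -> Un_cv (fun N => INR (S N) * INR (S N) * c ^ N) 0.
Proof.
  intros Hc.
  assert (He : 0 < sqrt c < 1).
  { split. apply sqrt_lt_R0; lra. rewrite <- sqrt_1. apply sqrt_lt_1; lra. }
  pose proof (CV_mult _ _ _ _ (cv_w _ He) (cv_w _ He)) as H.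
  rewrite Rmult_0_r in H.
  apply (cv_ext _ _ _ (fun n => eq_refl _)) in H.
  eapply cv_ext; [|exact H]. intro n. simpl.
  replace (c ^ n) with ((sqrt c * sqrt c) ^ n) by (rewrite sqrt_sqrt; lra).
  rewrite Rpow_mult_distr. ring.
Qed.

Lemma cv_bound (u v : nat -> R) L K : 0 < K ->
  (forall n, Rabs (u n - L) <= K * v n) -> Un_cv v 0 -> Un_cv u L.
Proof.
  intros HK Hb Hv eps He.
  destruct (Hv (eps / K)) as [N HN]. apply Rdiv_lt_0_compat; lra.
  exists N. intros n Hn. specialize (HN n Hn). unfold R_dist in *.
  rewrite Rminus_0_r in HN.
  eapply Rle_lt_trans. apply Hb.
  apply (Rmult_lt_reg_l (/ K)). apply Rinv_0_lt_compat; lra.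
  replace (/ K * (K * v n)) with (v n) by (field; lra).
  pose proof (Rle_abs (v n)).
  replace (/ K * eps) with (eps / K) by (field; lra). lra.
Qed.

Lemma Rlim_eq u l : Un_cv u l -> Rlim u = l.
Proof.
  intro H. unfold Rlim.
  pose proof (epsilon_spec (inhabits 0) (fun l => Un_cv u l) (ex_intro _ l H)) as H2.
  eapply UL_sequence; eauto.
Qed.

Lemma sum_add (f g : nat -> R) N :
  sum_f_R0 (fun k => f k + g k) N = sum_f_R0 f N + sum_f_R0 g N.
Proof. induction N; cbn [sum_f_R0]; [ring | rewrite IHN; ring]. Qed.

Lemma sum_bnd (f : nat -> R) B N :
  (forall i, (i <= N)%nat -> 0 <= f i <= B) -> 0 <= sum_f_R0 f N <= INR (S N) * B.
Proof.
  induction N; intro H; cbn [sum_f_R0].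
  - simpl. specialize (H 0%nat (le_n 0)). lra.
  - assert (IH := IHN (fun i Hi => H i (le_S _ _ Hi))).
    specialize (H (S N) (le_n _)). rewrite (S_INR (S N)). lra.
Qed.



Lemma ws_i0 q0 q1 q2 q12 i : wide_survival q0 q1 q2 q12 i 0%nat = (q0+q2)^i.
Proof. unfold wide_survival. simpl. rewrite Nat.sub_0_r. ring. Qed.

Lemma ws_0j q0 q1 q2 q12 j : wide_survival q0 q1 q2 q12 0%nat j = (q0+q1)^j.
Proof. unfold wide_survival. destruct j; simpl; ring. Qed.

Lemma ws_diag q0 q1 q2 q12 n : wide_survival q0 q1 q2 q12 n n = q0^n.
Proof. unfold wide_survival. rewrite Nat.leb_refl, Nat.sub_diag. simpl. ring. Qed.

Lemma ws_row q0 q1 q2 q12 N j : (j <= N)%nat ->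
  wide_survival q0 q1 q2 q12 (S N) j = (q0+q2) * (q0^j * (q0+q2)^(N-j)).
Proof.
  intro H. unfold wide_survival.
  replace (j <=? S N)%nat with true by (symmetry; apply Nat.leb_le; lia).
  replace (S N - j)%nat with (S (N - j)) by lia. simpl. ring.
Qed.

Lemma ws_col q0 q1 q2 q12 N i : (i <= N)%nat ->
  wide_survival q0 q1 q2 q12 i (S N) = (q0+q1) * (q0^i * (q0+q1)^(N-i)).
Proof.
  intro H. unfold wide_survival.
  replace (S N <=? i)%nat with false by (symmetry; apply Nat.leb_gt; lia).
  replace (S N - i)%nat with (S (N - i)) by lia. simpl. ring.
Qed.

Lemma ws_bound q0 q1 q2 q12 c i j : 0 <= q0 -> 0 <= q1 -> 0 <= q2 ->
  q0 + q2 <= c -> q0 + q1 <= c ->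
  0 <= wide_survival q0 q1 q2 q12 i j <= c ^ (Nat.max i j).
Proof.
  intros H0 H1 H2 Ha Hb. unfold wide_survival.
  destruct (j <=? i)%nat eqn:E.
  - apply Nat.leb_le in E. rewrite Nat.max_l by lia.
    replace (c ^ i) with (c ^ (i - j) * c ^ j) by (rewrite <- pow_add; f_equal; lia).
    split. apply Rmult_le_pos; apply pow_le; lra.
    apply Rmult_le_compat; try (apply pow_le; lra); apply pow_incr; lra.
  - apply Nat.leb_gt in E. rewrite Nat.max_r by lia.
    replace (c ^ j) with (c ^ (j - i) * c ^ i) by (rewrite <- pow_add; f_equal; lia).
    split. apply Rmult_le_pos; apply pow_le; lra.
    apply Rmult_le_compat; try (apply pow_le; lra); apply pow_incr; lra.
Qed.

Definition F (q0 x : R) (N : nat) := sum_f_R0 (fun j => q0^j * x^(N-j)) N.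

Lemma F_rec q0 x N : F q0 x (S N) = q0^(S N) + x * F q0 x N.
Proof.
  unfold F. cbn [sum_f_R0]. rewrite Nat.sub_diag.
  rewrite (sum_eq _ (fun j => x * (q0^j * x^(N-j)))).
  2:{ intros j Hj. replace (S N - j)%nat with (S (N - j)) by lia. simpl. ring. }
  rewrite sum_scal. simpl. ring.
Qed.

Lemma F_bound q0 x c N : 0 <= q0 <= c -> 0 <= x <= c ->
  0 <= F q0 x N <= INR (S N) * c ^ N.
Proof.
  intros H0 Hx. unfold F. apply sum_bnd. intros i Hi.
  replace (c ^ N) with (c ^ i * c ^ (N - i)) by (rewrite <- pow_add; f_equal; lia).
  split. apply Rmult_le_pos; apply pow_le; lra.
  apply Rmult_le_compat; try (apply pow_le; lra); apply pow_incr; lra.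
Qed.

Definition T q0 q1 q2 q12 N :=
  sum_f_R0 (fun i => sum_f_R0 (fun j => wide_survival q0 q1 q2 q12 i j) N) N.

Lemma row_sum q0 q1 q2 q12 N :
  sum_f_R0 (fun j => wide_survival q0 q1 q2 q12 (S N) j) N = (q0+q2) * F q0 (q0+q2) N.
Proof.
  unfold F. rewrite <- sum_scal. apply sum_eq. intros j Hj. apply ws_row; auto.
Qed.

Lemma col_sum q0 q1 q2 q12 N :
  sum_f_R0 (fun i => wide_survival q0 q1 q2 q12 i (S N)) N = (q0+q1) * F q0 (q0+q1) N.
Proof.
  unfold F. rewrite <- sum_scal. apply sum_eq. intros j Hj. apply ws_col; auto.
Qed.

Lemma T_rec q0 q1 q2 q12 N :
  T q0 q1 q2 q12 (S N) = T q0 q1 q2 q12 N + (q0+q1) * F q0 (q0+q1) N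
     + (q0+q2) * F q0 (q0+q2) N + q0^(S N).
Proof.
  unfold T. cbn [sum_f_R0].
  rewrite sum_add. rewrite col_sum.
  rewrite <- (ws_diag q0 q1 q2 q12 (S N)).
  rewrite <- (row_sum q0 q1 q2 q12 N). ring.
Qed.

Lemma T_closed q0 q1 q2 q12 N : q0 + q2 <> 1 -> q0 + q1 <> 1 ->
  T q0 q1 q2 q12 N =
   sum_f_R0 (fun j => q0^j) N
   + (q0+q2)/(1-(q0+q2)) * (sum_f_R0 (fun j => q0^j) N - F q0 (q0+q2) N)
   + (q0+q1)/(1-(q0+q1)) * (sum_f_R0 (fun j => q0^j) N - F q0 (q0+q1) N).
Proof.
  intros Ha Hb. induction N.
  - unfold T, F. simpl. rewrite ws_diag. simpl. field. split; lra.
  - rewrite T_rec, IHN, !F_rec. cbn [sum_f_R0]. field. split; lra.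
Qed.

Lemma geo1 x N : x <> 1 -> sum_f_R0 (fun i => x^i) N = (1 - x^(S N)) / (1 - x).
Proof.
  intro H. pose proof (GP_finite x N) as G. rewrite Nat.add_1_r in G.
  apply (Rmult_eq_reg_r (x - 1)). rewrite G. field. lra. lra.
Qed.

Lemma geo2 x N : x <> 1 -> sum_f_R0 (fun i => (2 * INR i + 1) * x^i) N
  = (1 + x - (2 * INR N + 3) * x^(S N) + (2 * INR N + 1) * x^(S (S N))) / (1 - x)^2.
Proof.
  intro H. induction N.
  - simpl. field. lra.
  - cbn [sum_f_R0]. rewrite IHN. rewrite S_INR. cbn [pow]. field. lra.
Qed.

Lemma at_pow c x N : 0 < c < 1 -> 0 <= x <= c ->
  (0 <= x^(S N) <= INR (S N) * INR (S N) * c ^ N) /\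
  (0 <= INR (S N) * x^(S N) <= INR (S N) * INR (S N) * c ^ N) /\
  (0 <= INR (S N) * INR (S N) * x^(S N) <= INR (S N) * INR (S N) * c ^ N).
Proof.
  intros Hc Hx.
  assert (Hm : 1 <= INR (S N)) by (rewrite S_INR; pose proof (pos_INR N); lra).
  assert (Hcn : 0 < c ^ N) by (apply pow_lt; lra).
  assert (Ht0 : 0 <= x ^ (S N)) by (apply pow_le; lra).
  assert (Ht : x ^ (S N) <= c ^ N).
  { apply (Rle_trans _ (c ^ (S N))). apply pow_incr; lra. simpl. nra. }
  set (m := INR (S N)) in *. set (t := x ^ (S N)) in *.
  assert (A1 : m * t <= m * c ^ N) by (apply Rmult_le_compat_l; lra).
  assert (A2 : m * c ^ N <= m * m * c ^ N) by (apply Rmult_le_compat_r; nra).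
  assert (A3 : m * m * t <= m * m * c ^ N) by (apply Rmult_le_compat_l; nra).
  assert (A4 : c ^ N <= m * c ^ N) by nra.
  assert (0 <= m * t) by nra. assert (0 <= m * m * t) by (apply Rmult_le_pos; nra).
  split; [|split]; split; lra.
Qed.

Lemma col_atoms q0 q1 q2 q12 c N : 0 <= q0 -> 0 <= q1 -> 0 <= q2 ->
  q0 + q2 <= c -> q0 + q1 <= c -> 0 < c < 1 ->
  let C := sum_f_R0 (fun i => wide_survival q0 q1 q2 q12 i (S N)) N in
  let W := sum_f_R0 (fun i => (2 * INR i + 1) * wide_survival q0 q1 q2 q12 i (S N)) N in
  let v := INR (S N) * INR (S N) * c ^ N in
  0 <= C <= v /\ 0 <= INR (S N) * C <= v /\ 0 <= W <= 2 * v.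
Proof.
  intros H0 H1 H2 Ha Hb Hc C W v.
  assert (Hm : 1 <= INR (S N)) by (rewrite S_INR; pose proof (pos_INR N); lra).
  assert (Hcn : 0 < c ^ N) by (apply pow_lt; lra).
  assert (HcS : c ^ (S N) <= c ^ N) by (simpl; nra).
  assert (HC : 0 <= C <= INR (S N) * c ^ (S N)).
  { apply sum_bnd. intros i Hi. pose proof (ws_bound q0 q1 q2 q12 c i (S N) H0 H1 H2 Ha Hb).
    rewrite Nat.max_r in H by lia. exact H. }
  assert (HW : 0 <= W <= INR (S N) * (2 * INR (S N) * c ^ (S N))).
  { apply sum_bnd. intros i Hi. pose proof (ws_bound q0 q1 q2 q12 c i (S N) H0 H1 H2 Ha Hb).
    rewrite Nat.max_r in H by lia.
    assert (INR i <= INR N) by (apply le_INR; lia). rewrite S_INR.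
    pose proof (pos_INR i). pose proof (pow_le c (S N)). nra. }
  unfold v. set (m := INR (S N)) in *. set (s := c ^ (S N)) in *. set (r := c ^ N) in *.
  split; [|split]; split; nra.
Qed.

Lemma row_atoms q0 q1 q2 q12 c N : 0 <= q0 -> 0 <= q1 -> 0 <= q2 ->
  q0 + q2 <= c -> q0 + q1 <= c -> 0 < c < 1 ->
  let C := sum_f_R0 (fun j => wide_survival q0 q1 q2 q12 (S N) j) N in
  let W := sum_f_R0 (fun j => (2 * INR j + 1) * wide_survival q0 q1 q2 q12 (S N) j) N in
  let v := INR (S N) * INR (S N) * c ^ N in
  0 <= C <= v /\ 0 <= INR (S N) * C <= v /\ 0 <= W <= 2 * v.
Proof.
  intros H0 H1 H2 Ha Hb Hc C W v.
  assert (Hm : 1 <= INR (S N)) by (rewrite S_INR; pose proof (pos_INR N); lra).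
  assert (Hcn : 0 < c ^ N) by (apply pow_lt; lra).
  assert (HcS : c ^ (S N) <= c ^ N) by (simpl; nra).
  assert (HC : 0 <= C <= INR (S N) * c ^ (S N)).
  { apply sum_bnd. intros i Hi. pose proof (ws_bound q0 q1 q2 q12 c (S N) i H0 H1 H2 Ha Hb).
    rewrite Nat.max_l in H by lia. exact H. }
  assert (HW : 0 <= W <= INR (S N) * (2 * INR (S N) * c ^ (S N))).
  { apply sum_bnd. intros i Hi. pose proof (ws_bound q0 q1 q2 q12 c (S N) i H0 H1 H2 Ha Hb).
    rewrite Nat.max_l in H by lia.
    assert (INR i <= INR N) by (apply le_INR; lia). rewrite S_INR.
    pose proof (pos_INR i). pose proof (pow_le c (S N)). nra. }
  unfold v. set (m := INR (S N)) in *. set (s := c ^ (S N)) in *. set (r := c ^ N) in *.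
  split; [|split]; split; nra.
Qed.

Lemma ExE1 q0 q1 q2 q12 c : 0 <= q0 -> 0 <= q1 -> 0 <= q2 ->
  q0 + q2 <= c -> q0 + q1 <= c -> 0 < c < 1 ->
  expect (wide_survival q0 q1 q2 q12) tau1 = 1 / (1 - (q0+q2)).
Proof.
  intros H0 H1 H2 Ha Hb Hc.
  unfold expect. apply Rlim_eq.
  apply (cv_bound _ (fun N => INR (S N) * INR (S N) * c ^ N) _ (1 / (1 - (q0+q2)) + 3)).
  { assert (0 < 1 / (1 - (q0+q2))) by (apply Rdiv_lt_0_compat; lra). lra. }
  2:{ apply cv_v; exact Hc. }
  intro N. unfold tau1. rewrite P1.
  rewrite (sum_eq _ (fun i => (q0+q2)^i)) by (intros; apply ws_i0).
  rewrite geo1 by lra. rewrite ws_i0, ws_diag.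
  destruct (col_atoms q0 q1 q2 q12 c N H0 H1 H2 Ha Hb Hc) as [C1 [C2 C3]].
  destruct (at_pow c (q0+q2) N Hc ltac:(lra)) as [A0 [A1 A2]].
  destruct (at_pow c q0 N Hc ltac:(lra)) as [B0 [B1 B2]].
  set (k := / (1 - (q0 + q2))).
  assert (Hk : 0 < k) by (apply Rinv_0_lt_compat; lra).
  set (C := sum_f_R0 (fun i => wide_survival q0 q1 q2 q12 i (S N)) N) in *.
  set (m := INR (S N)) in *. set (v := m * m * c ^ N) in *.
  set (t := (q0 + q2) ^ (S N)) in *. set (u := q0 ^ (S N)) in *.
  replace ((1 - t) / (1 - (q0 + q2)) - C - m * (t - u) - 1 / (1 - (q0 + q2)))
    with (- (k * t) - C - m * t + m * u) by (unfold k; field; lra).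
  replace (1 / (1 - (q0 + q2))) with k by (unfold k; field; lra).
  assert (k * t <= k * v) by (apply Rmult_le_compat_l; lra).
  assert (0 <= k * t) by (apply Rmult_le_pos; lra).
  apply Rabs_le. split; nra.
Qed.

Lemma ExE2 q0 q1 q2 q12 c : 0 <= q0 -> 0 <= q1 -> 0 <= q2 ->
  q0 + q2 <= c -> q0 + q1 <= c -> 0 < c < 1 ->
  expect (wide_survival q0 q1 q2 q12) tau2 = 1 / (1 - (q0+q1)).
Proof.
  intros H0 H1 H2 Ha Hb Hc.
  unfold expect. apply Rlim_eq.
  apply (cv_bound _ (fun N => INR (S N) * INR (S N) * c ^ N) _ (1 / (1 - (q0+q1)) + 3)).
  { assert (0 < 1 / (1 - (q0+q1))) by (apply Rdiv_lt_0_compat; lra). lra. }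
  2:{ apply cv_v; exact Hc. }
  intro N. unfold tau2. rewrite P2.
  rewrite (sum_eq _ (fun i => (q0+q1)^i)) by (intros; apply ws_0j).
  rewrite geo1 by lra. rewrite ws_0j, ws_diag.
  destruct (row_atoms q0 q1 q2 q12 c N H0 H1 H2 Ha Hb Hc) as [C1 [C2 C3]].
  destruct (at_pow c (q0+q1) N Hc ltac:(lra)) as [A0 [A1 A2]].
  destruct (at_pow c q0 N Hc ltac:(lra)) as [B0 [B1 B2]].
  set (k := / (1 - (q0 + q1))).
  assert (Hk : 0 < k) by (apply Rinv_0_lt_compat; lra).
  set (C := sum_f_R0 (fun j => wide_survival q0 q1 q2 q12 (S N) j) N) in *.
  set (m := INR (S N)) in *. set (v := m * m * c ^ N) in *.
  set (t := (q0 + q1) ^ (S N)) in *. set (u := q0 ^ (S N)) in *.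
  replace ((1 - t) / (1 - (q0 + q1)) - m * t - C + m * u - 1 / (1 - (q0 + q1)))
    with (- (k * t) - C - m * t + m * u) by (unfold k; field; lra).
  replace (1 / (1 - (q0 + q1))) with k by (unfold k; field; lra).
  assert (k * t <= k * v) by (apply Rmult_le_compat_l; lra).
  assert (0 <= k * t) by (apply Rmult_le_pos; lra).
  apply Rabs_le. split; nra.
Qed.

Lemma X_bound x m t v : 0 <= x <= 1 -> 1 <= m -> 0 <= t <= v -> 0 <= m * t <= v ->
  - (3 * v) <= - ((2 * m + 1) * t) + (2 * m - 1) * (x * t) <= 3 * v.
Proof. intros. nra. Qed.

Lemma ExE11 q0 q1 q2 q12 c : 0 <= q0 -> 0 <= q1 -> 0 <= q2 ->
  q0 + q2 <= c -> q0 + q1 <= c -> 0 < c < 1 ->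
  expect (wide_survival q0 q1 q2 q12) (fun i j => INR i * INR i)
    = (1 + (q0+q2)) / (1 - (q0+q2))^2.
Proof.
  intros H0 H1 H2 Ha Hb Hc.
  unfold expect. apply Rlim_eq.
  assert (Hk : 0 < / (1 - (q0+q2))^2) by (apply Rinv_0_lt_compat; apply pow_lt; lra).
  apply (cv_bound _ (fun N => INR (S N) * INR (S N) * c ^ N) _ (3 * / (1 - (q0+q2))^2 + 4)).
  { lra. }
  2:{ apply cv_v; exact Hc. }
  intro N. rewrite P11.
  rewrite (sum_eq _ (fun i => (2 * INR i + 1) * (q0+q2)^i)) by (intros; rewrite ws_i0; reflexivity).
  rewrite geo2 by lra. rewrite ws_i0, ws_diag.
  destruct (col_atoms q0 q1 q2 q12 c N H0 H1 H2 Ha Hb Hc) as [C1 [C2 C3]].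
  destruct (at_pow c (q0+q2) N Hc ltac:(lra)) as [A0 [A1 A2]].
  destruct (at_pow c q0 N Hc ltac:(lra)) as [B0 [B1 B2]].
  assert (Hm1 : 1 <= INR (S N)) by (rewrite S_INR; pose proof (pos_INR N); lra).
  pose proof (X_bound (q0+q2) (INR (S N)) ((q0+q2)^(S N)) (INR (S N) * INR (S N) * c ^ N)
     ltac:(lra) Hm1 A0 A1) as XB.
  set (k := / (1 - (q0 + q2))^2) in *.
  set (W := sum_f_R0 (fun i => (2 * INR i + 1) * wide_survival q0 q1 q2 q12 i (S N)) N) in *.
  match goal with |- Rabs ?e <= _ =>
    replace e with (k * (- ((2 * INR (S N) + 1) * (q0+q2)^(S N))
                     + (2 * INR (S N) - 1) * ((q0+q2) * (q0+q2)^(S N)))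
                    - W - INR (S N) * INR (S N) * (q0+q2)^(S N)
                    + INR (S N) * INR (S N) * q0^(S N))
  end.
  2:{ unfold k. rewrite S_INR. cbn [pow]. field. lra. }
  set (m := INR (S N)) in *. set (v := m * m * c ^ N) in *.
  set (t := (q0 + q2) ^ (S N)) in *. set (u := q0 ^ (S N)) in *.
  set (X := - ((2 * m + 1) * t) + (2 * m - 1) * ((q0 + q2) * t)) in *.
  assert (k * X <= k * (3 * v)) by (apply Rmult_le_compat_l; lra).
  assert (k * (- (3 * v)) <= k * X) by (apply Rmult_le_compat_l; lra).
  apply Rabs_le. split; nra.
Qed.

Lemma ExE22 q0 q1 q2 q12 c : 0 <= q0 -> 0 <= q1 -> 0 <= q2 ->
  q0 + q2 <= c -> q0 + q1 <= c -> 0 < c < 1 ->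
  expect (wide_survival q0 q1 q2 q12) (fun i j => INR j * INR j)
    = (1 + (q0+q1)) / (1 - (q0+q1))^2.
Proof.
  intros H0 H1 H2 Ha Hb Hc.
  unfold expect. apply Rlim_eq.
  assert (Hk : 0 < / (1 - (q0+q1))^2) by (apply Rinv_0_lt_compat; apply pow_lt; lra).
  apply (cv_bound _ (fun N => INR (S N) * INR (S N) * c ^ N) _ (3 * / (1 - (q0+q1))^2 + 4)).
  { lra. }
  2:{ apply cv_v; exact Hc. }
  intro N. rewrite P22.
  rewrite (sum_eq _ (fun i => (2 * INR i + 1) * (q0+q1)^i)) by (intros; rewrite ws_0j; reflexivity).
  rewrite geo2 by lra. rewrite ws_0j, ws_diag.
  destruct (row_atoms q0 q1 q2 q12 c N H0 H1 H2 Ha Hb Hc) as [C1 [C2 C3]].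
  destruct (at_pow c (q0+q1) N Hc ltac:(lra)) as [A0 [A1 A2]].
  destruct (at_pow c q0 N Hc ltac:(lra)) as [B0 [B1 B2]].
  assert (Hm1 : 1 <= INR (S N)) by (rewrite S_INR; pose proof (pos_INR N); lra).
  pose proof (X_bound (q0+q1) (INR (S N)) ((q0+q1)^(S N)) (INR (S N) * INR (S N) * c ^ N)
     ltac:(lra) Hm1 A0 A1) as XB.
  set (k := / (1 - (q0 + q1))^2) in *.
  set (W := sum_f_R0 (fun j => (2 * INR j + 1) * wide_survival q0 q1 q2 q12 (S N) j) N) in *.
  match goal with |- Rabs ?e <= _ =>
    replace e with (k * (- ((2 * INR (S N) + 1) * (q0+q1)^(S N))
                     + (2 * INR (S N) - 1) * ((q0+q1) * (q0+q1)^(S N)))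
                    - W - INR (S N) * INR (S N) * (q0+q1)^(S N)
                    + INR (S N) * INR (S N) * q0^(S N))
  end.
  2:{ unfold k. rewrite S_INR. cbn [pow]. field. lra. }
  set (m := INR (S N)) in *. set (v := m * m * c ^ N) in *.
  set (t := (q0 + q1) ^ (S N)) in *. set (u := q0 ^ (S N)) in *.
  set (X := - ((2 * m + 1) * t) + (2 * m - 1) * ((q0 + q1) * t)) in *.
  assert (k * X <= k * (3 * v)) by (apply Rmult_le_compat_l; lra).
  assert (k * (- (3 * v)) <= k * X) by (apply Rmult_le_compat_l; lra).
  apply Rabs_le. split; nra.
Qed.

Lemma ExE12 q0 q1 q2 q12 c : 0 <= q0 -> 0 <= q1 -> 0 <= q2 ->
  q0 + q2 <= c -> q0 + q1 <= c -> 0 < c < 1 ->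
  expect (wide_survival q0 q1 q2 q12) (fun i j => INR i * INR j)
    = (1 / (1 - (q0+q2)) + 1 / (1 - (q0+q1)) - 1) / (1 - q0).
Proof.
  intros H0 H1 H2 Ha Hb Hc.
  unfold expect. apply Rlim_eq.
  assert (Hq0 : q0 < 1) by lra. assert (Ha1 : 0 <= q0 + q2 < 1) by lra.
  assert (Hb1 : 0 <= q0 + q1 < 1) by lra. assert (Hq0c : q0 <= c) by lra.
  set (a := q0 + q2) in *. set (b := q0 + q1) in *.
  set (g := / (1 - q0)). set (ka := a / (1 - a)). set (kb := b / (1 - b)).
  assert (Hg : 0 < g) by (apply Rinv_0_lt_compat; lra).
  assert (Hka : 0 <= ka) by (apply Rmult_le_pos; [lra| left; apply Rinv_0_lt_compat; lra]).
  assert (Hkb : 0 <= kb) by (apply Rmult_le_pos; [lra| left; apply Rinv_0_lt_compat; lra]).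
  assert (Hgk : 0 < g * (1 + ka + kb)) by (apply Rmult_lt_0_compat; lra).
  apply (cv_bound _ (fun N => INR (S N) * INR (S N) * c ^ N) _ (g * (1 + ka + kb) + ka + kb + 3)).
  { lra. }
  2:{ apply cv_v; exact Hc. }
  intro N. rewrite P12.
  fold (T q0 q1 q2 q12 N). rewrite T_closed by (unfold a, b in *; lra).
  rewrite geo1 by lra. rewrite ws_diag.
  destruct (col_atoms q0 q1 q2 q12 c N H0 H1 H2 Ha Hb Hc) as [C1 [C2 C3]].
  destruct (row_atoms q0 q1 q2 q12 c N H0 H1 H2 Ha Hb Hc) as [R1 [R2 R3]].
  destruct (at_pow c q0 N Hc ltac:(lra)) as [B0 [B1 B2]].
  destruct (F_bound q0 a c N ltac:(lra) ltac:(lra)) as [Fa1 Fa2].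
  destruct (F_bound q0 b c N ltac:(lra) ltac:(lra)) as [Fb1 Fb2].
  assert (Hm1 : 1 <= INR (S N)) by (rewrite S_INR; pose proof (pos_INR N); lra).
  assert (Hcn : 0 < c ^ N) by (apply pow_lt; lra).
  assert (Hmv : INR (S N) * c ^ N <= INR (S N) * INR (S N) * c ^ N)
    by (apply Rmult_le_compat_r; nra).
  fold a b.
  set (C := sum_f_R0 (fun i => wide_survival q0 q1 q2 q12 i (S N)) N) in *.
  set (R := sum_f_R0 (fun j => wide_survival q0 q1 q2 q12 (S N) j) N) in *.
  set (Fa := F q0 a N) in *. set (Fb := F q0 b N) in *.
  set (m := INR (S N)) in *. set (v := m * m * c ^ N) in *.
  set (u := q0 ^ (S N)) in *.
  match goal with |- Rabs ?e <= _ =>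
    replace e with (- (g * (1 + ka + kb) * u) - ka * Fa - kb * Fb - m * C - m * R + m * m * u)
  end.
  2:{ unfold g, ka, kb. field. split; lra. }
  assert (g * (1 + ka + kb) * u <= g * (1 + ka + kb) * v) by (apply Rmult_le_compat_l; lra).
  assert (0 <= g * (1 + ka + kb) * u) by (apply Rmult_le_pos; lra).
  assert (ka * Fa <= ka * v) by (apply Rmult_le_compat_l; lra).
  assert (kb * Fb <= kb * v) by (apply Rmult_le_compat_l; lra).
  assert (0 <= ka * Fa) by (apply Rmult_le_pos; lra).
  assert (0 <= kb * Fb) by (apply Rmult_le_pos; lra).
  apply Rabs_le. split; nra.
Qed.

Lemma corr_iff q0 q1 q2 q12 : wide_params q0 q1 q2 q12 ->
  0 < q0 + q2 -> 0 < q0 + q1 ->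
  (Corr (wide_survival q0 q1 q2 q12) >= 0 <-> (q0+q2) * (q0+q1) <= q0).
Proof.
  intros [[H0 _] [[H1 _] [[H2 _] [_ [_ [Ha Hb]]]]]] Ha0 Hb0.
  set (c := Rmax (q0+q2) (q0+q1)).
  assert (Hac : q0 + q2 <= c) by apply Rmax_l.
  assert (Hbc : q0 + q1 <= c) by apply Rmax_r.
  assert (Hc : 0 < c < 1).
  { split. lra. unfold c. apply Rmax_lub_lt; lra. }
  unfold Corr, Cov, Var1, Var2.
  rewrite (ExE12 q0 q1 q2 q12 c), (ExE1 q0 q1 q2 q12 c), (ExE2 q0 q1 q2 q12 c),
    (ExE11 q0 q1 q2 q12 c), (ExE22 q0 q1 q2 q12 c) by lra.
  set (a := q0 + q2) in *. set (b := q0 + q1) in *.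
  assert (Hq0 : q0 < 1) by (unfold a in *; lra).
  assert (Hcov : (1 / (1 - a) + 1 / (1 - b) - 1) / (1 - q0) - 1 / (1 - a) * (1 / (1 - b))
                 = (q0 - a * b) / ((1 - q0) * (1 - a) * (1 - b))) by (field; lra).
  assert (HV1 : (1 + a) / (1 - a) ^ 2 - (1 / (1 - a)) ^ 2 = a / (1 - a) ^ 2) by (field; lra).
  assert (HV2 : (1 + b) / (1 - b) ^ 2 - (1 / (1 - b)) ^ 2 = b / (1 - b) ^ 2) by (field; lra).
  rewrite Hcov, HV1, HV2.
  assert (Hs : 0 < sqrt (a / (1 - a) ^ 2 * (b / (1 - b) ^ 2))).
  { apply sqrt_lt_R0. apply Rmult_lt_0_compat; apply Rdiv_lt_0_compat; try lra;
    apply pow_lt; lra. }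
  set (s := sqrt _) in *.
  assert (HD : 0 < (1 - q0) * (1 - a) * (1 - b)).
  { apply Rmult_lt_0_compat; [apply Rmult_lt_0_compat|]; lra. }
  set (D := (1 - q0) * (1 - a) * (1 - b)) in *.
  unfold Rdiv.
  assert (HiD : 0 < / D) by (apply Rinv_0_lt_compat; lra).
  assert (His : 0 < / s) by (apply Rinv_0_lt_compat; lra).
  split.
  - intro HH. destruct (Rle_or_lt (a * b) q0) as [|Hlt]; [assumption|].
    exfalso.
    assert ((q0 - a * b) * / D < 0).
    { nra. }
    assert ((q0 - a * b) * / D * / s < 0).
    { nra. }
    lra.
  - intro HH. apply Rle_ge. apply Rmult_le_pos; [apply Rmult_le_pos|]; lra.
Qed.

Lemma narrow_ok q0 q1 q2 q12 : 0 < q0 -> 0 <= q1 -> 0 <= q2 ->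
  q0 + q2 < 1 -> q0 + q1 < 1 -> (q0+q2) * (q0+q1) <= q0 ->
  let p1 := q0 / (q0 + q1) in
  let p2 := q0 / (q0 + q2) in
  let p12 := (q0 + q1) * (q0 + q2) / q0 in
  narrow_params p1 p2 p12 /\
  forall i j : nat, wide_survival q0 q1 q2 q12 i j = narrow_survival p1 p2 p12 i j.
Proof.
  intros H0 H1 H2 Ha Hb Hab p1 p2 p12.
  assert (E1 : p1 * p12 = q0 + q2) by (unfold p1, p12; field; lra).
  assert (E2 : p2 * p12 = q0 + q1) by (unfold p2, p12; field; lra).
  assert (E3 : p2 * (q0 + q2) = q0) by (unfold p2; field; lra).
  assert (E4 : p1 * (q0 + q1) = q0) by (unfold p1; field; lra).
  split.
  - unfold narrow_params. rewrite E1, E2.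
    repeat split; try lra; unfold p1, p2, p12.
    + apply Rmult_le_pos; [lra | left; apply Rinv_0_lt_compat; lra].
    + apply (Rmult_le_reg_r (q0 + q1)). lra. unfold Rdiv. rewrite Rmult_assoc, Rinv_l by lra. lra.
    + apply Rmult_le_pos; [lra | left; apply Rinv_0_lt_compat; lra].
    + apply (Rmult_le_reg_r (q0 + q2)). lra. unfold Rdiv. rewrite Rmult_assoc, Rinv_l by lra. lra.
    + apply Rmult_le_pos; [nra | left; apply Rinv_0_lt_compat; lra].
    + apply (Rmult_le_reg_r q0). lra. unfold Rdiv. rewrite Rmult_assoc, Rinv_l by lra. lra.
  - intros i j. unfold wide_survival, narrow_survival.
    destruct (j <=? i)%nat eqn:E.
    + apply Nat.leb_le in E. rewrite Nat.max_l by lia.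
      replace (p1 ^ i * p2 ^ j * p12 ^ i) with ((p1 * p12) ^ i * p2 ^ j)
        by (rewrite Rpow_mult_distr; ring).
      rewrite E1.
      replace ((q0 + q2) ^ i) with ((q0 + q2) ^ (i - j) * (q0 + q2) ^ j)
        by (rewrite <- pow_add; f_equal; lia).
      rewrite Rmult_assoc, <- Rpow_mult_distr, (Rmult_comm _ p2), E3. reflexivity.
    + apply Nat.leb_gt in E. rewrite Nat.max_r by lia.
      replace (p1 ^ i * p2 ^ j * p12 ^ j) with ((p2 * p12) ^ j * p1 ^ i)
        by (rewrite Rpow_mult_distr; ring).
      rewrite E2.
      replace ((q0 + q1) ^ j) with ((q0 + q1) ^ (j - i) * (q0 + q1) ^ i)
        by (rewrite <- pow_add; f_equal; lia).
      rewrite Rmult_assoc, <- Rpow_mult_distr, (Rmult_comm _ p1), E4. reflexivity.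
Qed.

Theorem mainTheorem9 (q0 q1 q2 q12 : R) :
  wide_params q0 q1 q2 q12 ->
  wide_survival q0 q1 q2 q12 1%nat 0%nat > 0 ->
  wide_survival q0 q1 q2 q12 0%nat 1%nat > 0 ->
  ((exists p1 p2 p12 : R, narrow_params p1 p2 p12 /\
      forall i j : nat, wide_survival q0 q1 q2 q12 i j = narrow_survival p1 p2 p12 i j)
   <-> Corr (wide_survival q0 q1 q2 q12) >= 0)
  /\
  (Corr (wide_survival q0 q1 q2 q12) >= 0 -> q0 > 0 ->
     let p1 := q0 / (q0 + q1) in
     let p2 := q0 / (q0 + q2) in
     let p12 := (q0 + q1) * (q0 + q2) / q0 in
     narrow_params p1 p2 p12 /\
     forall i j : nat, wide_survival q0 q1 q2 q12 i j = narrow_survival p1 p2 p12 i j).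
Proof.
  intros Hw H10 H01.
  rewrite ws_i0 in H10. rewrite ws_0j in H01. simpl in H10, H01.
  assert (Ha0 : 0 < q0 + q2) by lra. assert (Hb0 : 0 < q0 + q1) by lra.
  pose proof (corr_iff q0 q1 q2 q12 Hw Ha0 Hb0) as K.
  pose proof Hw as [[H0 _] [[H1 _] [[H2 _] [_ [_ [Ha Hb]]]]]].
  assert (P2 : Corr (wide_survival q0 q1 q2 q12) >= 0 -> q0 > 0 ->
     let p1 := q0 / (q0 + q1) in
     let p2 := q0 / (q0 + q2) in
     let p12 := (q0 + q1) * (q0 + q2) / q0 in
     narrow_params p1 p2 p12 /\
     forall i j : nat, wide_survival q0 q1 q2 q12 i j = narrow_survival p1 p2 p12 i j).
  { intros HC Hq0. apply narrow_ok; try lra; try (apply K; exact HC). }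
  split; [|exact P2].
  split.
  - intros [p1 [p2 [p12 [Hn Heq]]]].
    apply K.
    pose proof (Heq 1%nat 0%nat) as e10. pose proof (Heq 0%nat 1%nat) as e01.
    pose proof (Heq 1%nat 1%nat) as e11.
    rewrite ws_i0 in e10. rewrite ws_0j in e01. rewrite ws_diag in e11.
    unfold narrow_survival in *. simpl in e10, e01, e11.
    destruct Hn as [[Hp1 _] [[Hp2 _] [[Hp12 Hp12'] _]]].
    assert (Hq : (q0 + q2) * (q0 + q1) = q0 * p12) by nra.
    rewrite Hq. assert (0 <= q0) by lra. nra.
  - intro HC.
    assert (Hab : (q0+q2) * (q0+q1) <= q0) by (apply K; exact HC).
    assert (Hq0 : q0 > 0) by nra.
    destruct (P2 HC Hq0) as [Hn Heq].
    eexists; eexists; eexists. split; [exact Hn | exact Heq].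
Qed.
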